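(* Let $\eta>0$ be such that $\frac{1}{2\eta}$ and $\beta:=\frac{\eta}{300}T$ are integers, and let $\alpha:=\frac{100}{\eta}$ (assumed integer), so $T=3\alpha\beta$. Consider $K+1=3$ actions and the reward sequence consisting of $\beta$ identical batches; batch $i\in[\beta]$ consists of $\alpha$ rounds with reward vector $(1,1,0)$ (rounds $(i-1)3\alpha+1,\dots,(i-1)3\alpha+\alpha$), then $\alpha$ rounds with $(0,1,0)$, then $\alpha$ rounds with $(0,0,1)$. Then agile online gradient ascent with step size $\eta$ incurs swap regret $\Omega(T)$ on this sequence.
   Context: Agile online gradient ascent with step size $\eta$ on $K+1$ actions: $\boldsymbol{\pi}^{(1)}=(\frac{1}{K+1},\dots,\frac{1}{K+1})$; in round $t$ it plays the distribution $\boldsymbol{\pi}^{(t)}$, observes reward vector $\mathbf{r}^{(t)}$, and sets $\boldsymbol{\pi}^{(t+1)}:=\arg\min_{\boldsymbol{\pi}\in\Delta([K+1])}\|\boldsymbol{\pi}-(\boldsymbol{\pi}^{(t)}+\eta\mathbf{r}^{(t)})\|_2$, where $\Delta([K+1])$ is the probability simplex. The swap regret of an algorithm playing $\boldsymbol{\pi}^{(t)}$ against rewards $\mathbf{r}^{(t)}$ is $\max_{\phi:[K+1]\to[K+1]}\sum_{t\in[T]}\sum_{k\in[K+1]}\pi^{(t)}_k\big(r^{(t)}_{\phi(k)}-r^{(t)}_k\big)$. *)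

(* Defs.v *)
From HB Require Import structures.
From mathcomp Require Import all_boot all_order all_algebra.
From mathcomp Require Import reals.
Set Implicit Arguments. Unset Strict Implicit. Unset Printing Implicit Defensive.
Import Order.TTheory GRing.Theory Num.Theory.
Local Open Scope ring_scope.

Section Defs.
Variable R : realType.

(* probability simplex on K+1 actions, K+1 = n *)
Definition in_simplex (n : nat) (p : 'I_n -> R) : Prop :=
  (forall k, 0 <= p k) /\ \sum_(k < n) p k = 1.

Definition dist2 (n : nat) (p y : 'I_n -> R) : R :=
  Num.sqrt (\sum_(k < n) (p k - y k) ^+ 2).

(* Agile online gradient ascent with step size eta, rounds indexed from 0:
   pi 0 is uniform, and pi (t+1) is the (unique) Euclidean projection of
   pi t + eta * r t onto the simplex (stated as: a minimiser of the distance). *)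
Definition agile_oga (n : nat) (eta : R) (r : nat -> 'I_n -> R)
    (pi : nat -> 'I_n -> R) : Prop :=
  (forall k, pi 0%N k = (n%:R)^-1) /\
  forall t : nat,
    let y := fun k => pi t k + eta * r t k in
    in_simplex (pi t.+1) /\
    forall p : 'I_n -> R, in_simplex p -> dist2 (pi t.+1) y <= dist2 p y.

Definition swap_regret_phi (n T : nat) (pi r : nat -> 'I_n -> R)
    (phi : {ffun 'I_n -> 'I_n}) : R :=
  \sum_(t < T) \sum_(k < n) pi t k * (r t (phi k) - r t k).

(* swap regret = max over all phi : [n] -> [n] (the identity is included,
   so it is used as the initial value of the iterated max) *)
Definition swap_regret (n T : nat) (pi r : nat -> 'I_n -> R) : R :=
  \big[Num.max/swap_regret_phi T pi r [ffun k => k]]_(phi : {ffun 'I_n -> 'I_n})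
     swap_regret_phi T pi r phi.

(* The reward sequence (0-based rounds): every block of 3*alpha rounds consists
   of alpha rounds of (1,1,0), alpha rounds of (0,1,0), alpha rounds of (0,0,1). *)
Definition batch_rewards (alpha : nat) (t : nat) (k : 'I_3) : R :=
  let j := (t %% (3 * alpha))%N in
  if (j < alpha)%N then (if (k < 2)%N then 1 else 0)
  else if (j < 2 * alpha)%N then (if k == 1%N :> nat then 1 else 0)
  else (if k == 2%N :> nat then 1 else 0).

End Defs.

(* Main.v *)
Require Import Defs.
From HB Require Import structures.
From mathcomp Require Import all_boot all_order all_algebra.
From mathcomp Require Import reals ring lra zify.
Import Order.TTheory GRing.Theory Num.Theory.
Local Open Scope ring_scope.

Definition i0 : 'I_3 := @Ordinal 3 0 isT.
Definition i1 : 'I_3 := @Ordinal 3 1 isT.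
Definition i2 : 'I_3 := @Ordinal 3 2 isT.

Lemma ord3_cases (k : 'I_3) : k = i0 \/ k = i1 \/ k = i2.
Proof.
case: k => [[|[|[|n]]] Hn].
- by left; apply/val_inj.
- by right; left; apply/val_inj.
- by right; right; apply/val_inj.
- by [].
Qed.

Section Basic.
Variable R : realType.

Lemma sum3 (f : 'I_3 -> R) : \sum_(k < 3) f k = f i0 + f i1 + f i2.
Proof.
rewrite !big_ord_recr big_ord0 /= add0r.
by congr (_ + _ + _); congr f; apply/val_inj.
Qed.

Definition vec3 (a b c : R) : 'I_3 -> R :=
  fun k => if val k == 0%N then a else if val k == 1%N then b else c.

Lemma simplexE {f : 'I_3 -> R} : in_simplex f ->
  [/\ 0 <= f i0, 0 <= f i1, 0 <= f i2 & f i0 + f i1 + f i2 = 1].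
Proof. by case=> H1; rewrite sum3 => H2; split. Qed.

Lemma vec3_simplex {a b c : R} : 0 <= a -> 0 <= b -> 0 <= c -> a + b + c = 1 ->
  in_simplex (vec3 a b c).
Proof.
move=> ha hb hc hs; split; last by rewrite sum3.
by move=> k; case: (ord3_cases k) => [->|[->|->]].
Qed.

Lemma gen_pos (A B : R) : (forall s, 0 < s -> s <= 1 -> 0 <= 2*s*A + s^+2*B) ->
  0 <= B -> 0 <= A.
Proof.
move=> H hB; rewrite leNgt; apply/negP => hA.
have hD : 0 < B - A by lra.
have := H ((- A) / (B - A)).
have s0 : 0 < (- A) / (B - A) by apply: divr_gt0; lra.
have s1 : (- A) / (B - A) <= 1 by rewrite ler_pdivrMr //; lra.
move=> /(_ s0 s1).
have -> : 2 * (- A / (B - A)) * A + (- A / (B - A)) ^+ 2 * B =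
    (A^+2 * (2*A - B)) / (B - A)^+2.
  by field; lra.
rewrite pmulr_lge0 ?invr_gt0 ?exprn_gt0 //.
have : 0 < A^+2 by rewrite expr2; nra.
nra.
Qed.

Lemma kkt (x y : 'I_3 -> R) : in_simplex x ->
  (forall q, in_simplex q -> dist2 x y <= dist2 q y) ->
  exists l, forall k, (x k = 0 /\ y k - l <= 0) \/ x k = y k - l.
Proof.
move=> Hx Hmin; have [h0 h1 h2 hs] := simplexE Hx.
have Hm : forall a b c : R, 0 <= a -> 0 <= b -> 0 <= c -> a + b + c = 1 ->
  (x i0 - y i0)^+2 + (x i1 - y i1)^+2 + (x i2 - y i2)^+2 <=
  (a - y i0)^+2 + (b - y i1)^+2 + (c - y i2)^+2.
  move=> a b c ha hb hc habc.
  have := Hmin _ (vec3_simplex ha hb hc habc : in_simplex (vec3 a b c)).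
  rewrite /dist2 !sum3 /vec3 /= ler_sqrt //.
  by rewrite !addr_ge0 // sqr_ge0.
have vi : forall a b c : R, 0 <= a -> 0 <= b -> 0 <= c -> a + b + c = 1 ->
  0 <= (x i0 - y i0)*(a - x i0) + (x i1 - y i1)*(b - x i1) + (x i2 - y i2)*(c - x i2).
  move=> a b c ha hb hc habc.
  apply: (@gen_pos _ ((a - x i0)^+2 + (b - x i1)^+2 + (c - x i2)^+2)); last first.
    by rewrite !addr_ge0 // sqr_ge0.
  move=> s s0 s1.
  have := Hm (x i0 + s*(a - x i0)) (x i1 + s*(b - x i1)) (x i2 + s*(c - x i2)).
  have e : forall u v, 0 <= u -> 0 <= v -> 0 <= u + s*(v - u).
    by move=> u v hu hv; nra.
  move=> /(_ (e _ _ h0 ha) (e _ _ h1 hb) (e _ _ h2 hc)).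
  have -> : x i0 + s * (a - x i0) + (x i1 + s * (b - x i1)) + (x i2 + s * (c - x i2))
     = (x i0 + x i1 + x i2) + s * ((a + b + c) - (x i0 + x i1 + x i2)) by ring.
  rewrite hs habc subrr mulr0 addr0 => /(_ erefl) H.
  set L := _ + _ + _ in H; set Q := _ + _ + _ in H.
  have : Q - L = 2 * s * ((x i0 - y i0)*(a - x i0) + (x i1 - y i1)*(b - x i1) + (x i2 - y i2)*(c - x i2))
     + s ^+ 2 * ((a - x i0) ^+ 2 + (b - x i1) ^+ 2 + (c - x i2) ^+ 2).
    by rewrite /Q /L; ring.
  move=> <-; lra.
have v0 := vi 1 0 0 ler01 (lexx 0) (lexx 0) ltac:(by rewrite !addr0).
have v1 := vi 0 1 0 (lexx 0) ler01 (lexx 0) ltac:(by rewrite add0r addr0).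
have v2 := vi 0 0 1 (lexx 0) (lexx 0) ler01 ltac:(by rewrite !add0r).
pose l := x i0 * (y i0 - x i0) + x i1 * (y i1 - x i1) + x i2 * (y i2 - x i2).
exists l.
have d0 : y i0 - x i0 <= l by rewrite /l; nra.
have d1 : y i1 - x i1 <= l by rewrite /l; nra.
have d2 : y i2 - x i2 <= l by rewrite /l; nra.
have t0 : 0 <= x i0 * (l - (y i0 - x i0)) by apply: mulr_ge0; lra.
have t1 : 0 <= x i1 * (l - (y i1 - x i1)) by apply: mulr_ge0; lra.
have t2 : 0 <= x i2 * (l - (y i2 - x i2)) by apply: mulr_ge0; lra.
have ts : x i0 * (l - (y i0 - x i0)) + x i1 * (l - (y i1 - x i1))
          + x i2 * (l - (y i2 - x i2)) = l * (x i0 + x i1 + x i2) - l.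
  by rewrite /l; ring.
rewrite hs mulr1 subrr in ts.
have cs : forall j, 0 <= x j -> y j - x j <= l -> x j * (l - (y j - x j)) = 0 ->
    (x j = 0 /\ y j - l <= 0) \/ x j = y j - l.
  move=> j hj hd /eqP; rewrite mulf_eq0 => /orP [/eqP e|/eqP e].
    by left; split => //; lra.
  by right; lra.
move=> k; case: (ord3_cases k) => [->|[->|->]].
- by apply: cs => //; lra.
- by apply: cs => //; lra.
- by apply: cs => //; lra.
Qed.

Lemma le1 (a b c : R) : 0 <= a -> 0 <= b -> 0 <= c -> a + b + c = 1 ->
  [/\ a <= 1, b <= 1 & c <= 1].
Proof. by move=> *; split; lra. Qed.

Lemma alg1 (e l p0 p1 p2 x0 x1 x2 K : R) : 0 < e ->
  0 <= p0 -> 0 <= p1 -> 0 <= p2 -> p0 + p1 + p2 = 1 ->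
  0 <= x0 -> 0 <= x1 -> 0 <= x2 -> x0 + x1 + x2 = 1 ->
  ((x0 = 0 /\ p0 + e - l <= 0) \/ x0 = p0 + e - l) ->
  ((x1 = 0 /\ p1 + e - l <= 0) \/ x1 = p1 + e - l) ->
  ((x2 = 0 /\ p2 - l <= 0) \/ x2 = p2 - l) ->
  p0 = p1 -> (p2 = 0 \/ p2 <= 1 - 2/3 * K) ->
  x0 = x1 /\ (x2 = 0 \/ x2 <= 1 - 2/3 * (K + e)).
Proof.
move=> he hp0 hp1 hp2 hps hx0 hx1 hx2 hxs D0 D1 D2 E C.
case: D0 => [[a0 b0]|a0]; case: D1 => [[a1 b1]|a1]; case: D2 => [[a2 b2]|a2]; case: C => c;
  (split; [lra | first [by left; lra | by right; lra]]).
Qed.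

Lemma alg2 (e l p0 p1 p2 x0 x1 x2 K : R) : 0 < e ->
  0 <= p0 -> 0 <= p1 -> 0 <= p2 -> p0 + p1 + p2 = 1 ->
  0 <= x0 -> 0 <= x1 -> 0 <= x2 -> x0 + x1 + x2 = 1 ->
  ((x0 = 0 /\ p0 - l <= 0) \/ x0 = p0 - l) ->
  ((x1 = 0 /\ p1 + e - l <= 0) \/ x1 = p1 + e - l) ->
  ((x2 = 0 /\ p2 - l <= 0) \/ x2 = p2 - l) ->
  1/2 - K <= p0 -> 1/2 - (K + e) <= x0.
Proof.
move=> he hp0 hp1 hp2 hps hx0 hx1 hx2 hxs D0 D1 D2 C.
case: D0 => [[a0 b0]|a0]; case: D1 => [[a1 b1]|a1]; case: D2 => [[a2 b2]|a2]; lra.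
Qed.

Lemma alg3 (e l p0 p1 p2 x0 x1 x2 K : R) : 0 < e ->
  0 <= p0 -> 0 <= p1 -> 0 <= p2 -> p0 + p1 + p2 = 1 ->
  0 <= x0 -> 0 <= x1 -> 0 <= x2 -> x0 + x1 + x2 = 1 ->
  ((x0 = 0 /\ p0 - l <= 0) \/ x0 = p0 - l) ->
  ((x1 = 0 /\ p1 - l <= 0) \/ x1 = p1 - l) ->
  ((x2 = 0 /\ p2 + e - l <= 0) \/ x2 = p2 + e - l) ->
  (p0 = 0 \/ p0 <= 1 - K/3) -> (p1 = 0 \/ p1 <= 1 - K/3) ->
  (x0 = 0 \/ x0 <= 1 - (K + e)/3) /\ (x1 = 0 \/ x1 <= 1 - (K + e)/3).
Proof.
move=> he hp0 hp1 hp2 hps hx0 hx1 hx2 hxs D0 D1 D2 C0 C1.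
case: D0 => [[a0 b0]|a0]; case: D1 => [[a1 b1]|a1]; case: D2 => [[a2 b2]|a2];
  case: C0 => c0; case: C1 => c1;
  (split; first [by left; lra | by right; lra]).
Qed.

Lemma alg_end1 (a b c K : R) : 0 <= c -> a + b + c = 1 -> a = b -> K = 100 ->
  (c = 0 \/ c <= 1 - 2/3 * K) -> a = 1/2.
Proof. by move=> ? ? ? ? [?|?]; lra. Qed.

Lemma alg_end3 (a b K : R) : 0 <= a -> 0 <= b -> K = 100 ->
  (a = 0 \/ a <= 1 - K/3) -> (b = 0 \/ b <= 1 - K/3) -> a = b.
Proof. by move=> ? ? ? [?|?] [?|?]; lra. Qed.

Lemma le_bigmax_seq (I : eqType) (s : seq I) (F : I -> R) x0 i :
  i \in s -> F i <= \big[Num.max/x0]_(j <- s) F j.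
Proof.
elim: s => // a s IH; rewrite in_cons big_cons => /orP[/eqP <-|/IH h].
  by rewrite le_max lexx.
by rewrite le_max h orbT.
Qed.

Lemma sumsplit (F : nat -> R) n a b : n = (a + b)%N ->
  \sum_(j < n) F j = \sum_(j < a) F j + \sum_(j < b) F (a + j)%N.
Proof. by move=> ->; rewrite big_split_ord. Qed.

Lemma sumlin (e : R) n :
  \sum_(j < n) (1/2 - j%:R * e) = n%:R / 2 - e * (n%:R * (n%:R - 1)) / 2.
Proof.
elim: n => [|n IH]; first by rewrite big_ord0; ring.
by rewrite big_ord_recr /= IH -[n.+1]addn1 natrD; field.
Qed.

Lemma alg_sum (M e S1 S2 S3 : R) : M * (2 * e) = 1 -> 0 <= S1 -> 0 <= S3 ->
  M / 2 - e * (M * (M - 1)) / 2 <= S2 -> M / 4 <= S1 + (S2 + S3).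
Proof.
move=> H h1 h3.
have -> : e * (M * (M - 1)) = (M * (2 * e)) * (M - 1) / 2 by field.
rewrite H; lra.
Qed.

End Basic.
Arguments sum3 {R}.
Arguments simplexE {R f}.
Arguments vec3_simplex {R a b c}.
Arguments kkt {R x y}.
Arguments le_bigmax_seq {R I s F x0 i}.
Arguments sumsplit {R} F {n a b}.
Arguments alg_sum {R M e S1 S2 S3}.
Arguments le1 {R a b c}.
Arguments alg1 {R e l p0 p1 p2 x0 x1 x2 K}.
Arguments alg2 {R e l p0 p1 p2 x0 x1 x2 K}.
Arguments alg3 {R e l p0 p1 p2 x0 x1 x2 K}.
Arguments alg_end1 {R a b c K}.
Arguments alg_end3 {R a b K}.

Definition phi0 : {ffun 'I_3 -> 'I_3} := [ffun k => if k == i0 then i1 else k].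

Section Dyn.
Variables (R : realType) (eta : R) (m A : nat) (pi : nat -> 'I_3 -> R).
Hypotheses (Heta : 0 < eta) (Hm : m%:R * (2 * eta) = 1) (HAm : A = (200 * m)%N)
  (Hag : agile_oga eta (batch_rewards R A) pi).

Notation r := (batch_rewards R A).

Lemma HA : A%:R * eta = 100.
Proof.
rewrite HAm natrM.
have -> : (200%:R * m%:R * eta : R) = 100 * (m%:R * (2 * eta)) by ring.
by rewrite Hm mulr1.
Qed.

Lemma simplex_pi t : in_simplex (pi t).
Proof.
case: t => [|t]; last by case: (Hag.2 t).
have H0 := Hag.1; split.
  by move=> k; rewrite H0 invr_ge0 ler0n.
by rewrite sum3 !H0; lra.
Qed.

Lemma step t : exists l, forall k,
  (pi t.+1 k = 0 /\ pi t k + eta * r t k - l <= 0) \/ pi t.+1 k = pi t k + eta * r t k - l.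
Proof.
have [Hs Hmin] := Hag.2 t.
exact: (@kkt R (pi t.+1) (fun k => pi t k + eta * r t k) Hs Hmin).
Qed.

Lemma rmod b j : (j < 3 * A)%N -> ((3 * A * b + j) %% (3 * A) = j)%N.
Proof. by move=> hj; rewrite mulnC modnMDl modn_small. Qed.

Lemma rew1 b k : (k < A)%N ->
  [/\ r (3*A*b + k)%N i0 = 1, r (3*A*b + k)%N i1 = 1 & r (3*A*b + k)%N i2 = 0].
Proof.
move=> hk; rewrite /batch_rewards rmod; last by lia.
by rewrite hk.
Qed.

Lemma rew2 b k : (k < A)%N ->
  [/\ r (3*A*b + (A + k))%N i0 = 0, r (3*A*b + (A + k))%N i1 = 1 & r (3*A*b + (A + k))%N i2 = 0].
Proof.
move=> hk; rewrite /batch_rewards rmod; last by lia.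
rewrite (_ : (A + k < A)%N = false); last by apply/negP; lia.
by rewrite (_ : (A + k < 2 * A)%N = true); last by apply/idP; lia.
Qed.

Lemma rew3 b k : (k < A)%N ->
  [/\ r (3*A*b + (2*A + k))%N i0 = 0, r (3*A*b + (2*A + k))%N i1 = 0 & r (3*A*b + (2*A + k))%N i2 = 1].
Proof.
move=> hk; rewrite /batch_rewards rmod; last by lia.
rewrite (_ : (2*A + k < A)%N = false); last by apply/negP; lia.
by rewrite (_ : (2*A + k < 2 * A)%N = false); last by apply/negP; lia.
Qed.

Lemma natS (k : nat) : (k.+1%:R : R) * eta = k%:R * eta + eta.
Proof. by rewrite mulrSr mulrDl mul1r. Qed.

Lemma phase1 b : pi (3*A*b)%N i0 = pi (3*A*b)%N i1 -> forall k, (k <= A)%N ->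
  pi (3*A*b + k)%N i0 = pi (3*A*b + k)%N i1 /\
  (pi (3*A*b + k)%N i2 = 0 \/ pi (3*A*b + k)%N i2 <= 1 - 2/3 * (k%:R * eta)).
Proof.
move=> Hb; elim=> [|k IH] hk.
  rewrite addn0 mul0r mulr0 subr0; split => //; right.
  by case: (simplexE (simplex_pi (3*A*b)%N)) => a b' c d; case: (le1 a b' c d).
have hk' : (k < A)%N by lia.
have [IH1 IH2] := IH (ltnW hk').
rewrite addnS natS.
have [l Hl] := step (3*A*b + k)%N.
have [p0 p1 p2 ps] := simplexE (simplex_pi (3*A*b+k)%N).
have [x0 x1 x2 xs] := simplexE (simplex_pi (3*A*b+k)%N.+1).
have [r0 r1 r2] := rew1 b k hk'.
have D0 := Hl i0; have D1 := Hl i1; have D2 := Hl i2.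
rewrite r0 mulr1 in D0; rewrite r1 mulr1 in D1; rewrite r2 mulr0 addr0 in D2.
exact: (alg1 Heta p0 p1 p2 ps x0 x1 x2 xs D0 D1 D2 IH1 IH2).
Qed.

Lemma phase1_end b : pi (3*A*b)%N i0 = pi (3*A*b)%N i1 -> pi (3*A*b + A)%N i0 = 1/2.
Proof.
move=> Hb; have [e1 e2] := phase1 b Hb A (leqnn A).
have [p0 p1 p2 ps] := simplexE (simplex_pi (3*A*b+A)%N).
exact: (alg_end1 p2 ps e1 HA e2).
Qed.

Lemma phase2 b : pi (3*A*b)%N i0 = pi (3*A*b)%N i1 -> forall k, (k <= A)%N ->
  1/2 - k%:R * eta <= pi (3*A*b + (A + k))%N i0.
Proof.
move=> Hb; elim=> [|k IH] hk.
  by rewrite addn0 phase1_end // mul0r subr0.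
have hk' : (k < A)%N by lia.
have IH1 := IH (ltnW hk').
rewrite addnS addnS natS.
have [l Hl] := step (3*A*b + (A + k))%N.
have [p0 p1 p2 ps] := simplexE (simplex_pi (3*A*b+(A + k))%N).
have [x0 x1 x2 xs] := simplexE (simplex_pi (3*A*b+(A + k))%N.+1).
have [r0 r1 r2] := rew2 b k hk'.
have D0 := Hl i0; have D1 := Hl i1; have D2 := Hl i2.
rewrite r0 mulr0 addr0 in D0; rewrite r1 mulr1 in D1; rewrite r2 mulr0 addr0 in D2.
exact: (alg2 Heta p0 p1 p2 ps x0 x1 x2 xs D0 D1 D2 IH1).
Qed.

Lemma phase3 b k : (k <= A)%N ->
  (pi (3*A*b + (2*A + k))%N i0 = 0 \/ pi (3*A*b + (2*A + k))%N i0 <= 1 - (k%:R * eta)/3) /\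
  (pi (3*A*b + (2*A + k))%N i1 = 0 \/ pi (3*A*b + (2*A + k))%N i1 <= 1 - (k%:R * eta)/3).
Proof.
elim: k => [|k IH] hk.
  rewrite !mul0r subr0.
  by case: (simplexE (simplex_pi (3*A*b + (2*A + 0))%N)) => a b' c d; case: (le1 a b' c d); split; right.
have hk' : (k < A)%N by lia.
have [IH1 IH2] := IH (ltnW hk').
rewrite addnS addnS natS.
have [l Hl] := step (3*A*b + (2*A + k))%N.
have [p0 p1 p2 ps] := simplexE (simplex_pi (3*A*b+(2*A + k))%N).
have [x0 x1 x2 xs] := simplexE (simplex_pi (3*A*b+(2*A + k))%N.+1).
have [r0 r1 r2] := rew3 b k hk'.
have D0 := Hl i0; have D1 := Hl i1; have D2 := Hl i2.
rewrite r0 mulr0 addr0 in D0; rewrite r1 mulr0 addr0 in D1; rewrite r2 mulr1 in D2.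
exact: (alg3 Heta p0 p1 p2 ps x0 x1 x2 xs D0 D1 D2 IH1 IH2).
Qed.

Lemma start_eq b : pi (3*A*b)%N i0 = pi (3*A*b)%N i1.
Proof.
case: b => [|b].
  by rewrite muln0 !Hag.1.
have [e0 e1] := phase3 b A (leqnn A).
have E : (3*A*b.+1 = 3*A*b + (2*A + A))%N by lia.
have [p0 p1 p2 ps] := simplexE (simplex_pi (3*A*b+(2*A + A))%N).
rewrite E; exact: (alg_end3 p0 p1 HA e0 e1).
Qed.

Definition g t := pi t i0 * (r t i1 - r t i0).

Lemma gE t : \sum_(k < 3) pi t k * (r t (phi0 k) - r t k) = g t.
Proof.
rewrite sum3 !ffunE eqxx.
have -> : (i1 == i0) = false by [].
have -> : (i2 == i0) = false by [].
by rewrite !subrr !mulr0 !addr0.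
Qed.

Lemma g_ge0 t : 0 <= g t.
Proof.
apply: mulr_ge0; first by case: (simplexE (simplex_pi t)).
rewrite /batch_rewards; do 2?case: ifP => _ /=; rewrite ?subrr ?subr0 ?lexx ?ler01 //.
Qed.

Lemma batch b : m%:R / 4 <= \sum_(j < 3*A) g (3*A*b + j)%N.
Proof.
rewrite (sumsplit (fun j => g (3*A*b + j)%N) (a:=A) (b:=(m + (2*A - m))%N)); last by rewrite HAm; lia.
rewrite (sumsplit (fun j => g (3*A*b + (A + j))%N) (a:=m) (b:=(2*A - m)%N)) //.
apply: alg_sum Hm _ _ _.
- by apply: sumr_ge0 => j _; exact: g_ge0.
- by apply: sumr_ge0 => j _; exact: g_ge0.
rewrite -sumlin; apply: ler_sum => j _.
have hj : (j < A)%N by have := ltn_ord j; rewrite HAm; lia.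
have [r0 r1 r2] := rew2 b j hj.
rewrite /g r0 r1 subr0 mulr1.
apply: phase2; first exact: start_eq.
exact: ltnW.
Qed.

Lemma total n : n%:R * (m%:R / 4) <= \sum_(t < (3*A*n)%N) g t.
Proof.
elim: n => [|n IH]; first by rewrite muln0 big_ord0 mul0r.
rewrite (sumsplit g (a:=(3*A*n)%N) (b:=(3*A)%N)); last by rewrite mulnSr.
rewrite mulrSr mulrDl mul1r.
exact: lerD IH (batch n).
Qed.

Lemma regret_bound n : n%:R * (m%:R / 4) <= swap_regret (3*A*n)%N pi r.
Proof.
apply: le_trans (total n) _.
rewrite /swap_regret.
apply: le_trans _ (le_bigmax_seq (mem_index_enum phi0)).
rewrite /swap_regret_phi le_eqVlt; apply/orP; left; apply/eqP.
by apply: eq_bigr => t _; rewrite gE.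
Qed.

End Dyn.

Theorem mainTheorem10 (R : realType) :
  exists c : R, 0 < c /\
  forall (eta : R) (m beta : nat) (pi : nat -> 'I_3 -> R),
    0 < eta -> (2 * eta)^-1 = m%:R ->
    let alpha := (200 * m)%N in
    let T := (3 * alpha * beta)%N in
    agile_oga eta (batch_rewards R alpha) pi ->
    swap_regret T pi (batch_rewards R alpha) >= c * T%:R.
Proof.
exists (1 / 2400); split; first lra.
move=> eta m beta pi he hm alpha T Hag.
have Hm : m%:R * (2 * eta) = 1.
  by rewrite -hm mulVf // mulf_neq0 // ?gt_eqF.
have := @regret_bound R eta m alpha pi he Hm (erefl alpha) Hag beta.
have -> : (1 / 2400 : R) * T%:R = beta%:R * (m%:R / 4).
  by rewrite /T /alpha !natrM; field.
by [].
Qed.
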